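(* Let $P$ be a set of $n$ points in $\mathbb{R}^2$ in general position, and consider any convex hull peeling process on $P$, i.e. any sequence of steps each deleting one vertex of the convex hull of the current point set. Then the total number of times any point becomes active for any hull point (over the initial configuration and all steps of the process) is at most $3n$.
   Context: For the current point set $S$, $L^1$ is the set of vertices of $CH(S)$ and $L^2$ the set of vertices of $CH(S\setminus L^1)$. For consecutive points $(t,u,v)$ of $L^1$, a point $p$ is active for $u$ (equivalently, active in $u$'s triangle $\triangle(t,u,v)$) if, upon deleting $u$ from $S$ and recomputing the first and second convex layers, $p$ moves to the first layer. A point $p$ becomes active for $u$ at a given configuration if it is active for $u$ there but was not active for $u$ in the previous configuration (or if this is the initial configuration). *)

(* Defs.v *)
From HB Require Import structures.
From mathcomp Require Import all_boot all_order all_algebra.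
From mathcomp Require Import reals.
Set Implicit Arguments. Unset Strict Implicit. Unset Printing Implicit Defensive.
Import Order.TTheory GRing.Theory Num.Theory.
Local Open Scope ring_scope.

Section Hull.
Variable R : realType.
Notation pt := (R * R)%type.

Definition in_conv (S : seq pt) (p : pt) : Prop :=
  exists w : pt -> R,
    (forall q, q \in S -> 0 <= w q) /\
    \sum_(q <- S) w q = 1 /\
    p = (\sum_(q <- S) w q * q.1, \sum_(q <- S) w q * q.2).

Definition hull_vertex (S : seq pt) (p : pt) : Prop :=
  p \in S /\ ~ in_conv [seq q <- S | q != p] p.

Definition general_position (P : seq pt) : Prop :=
  forall a b c, a \in P -> b \in P -> c \in P ->
    a != b -> b != c -> a != c ->
    (b.1 - a.1) * (c.2 - a.2) - (b.2 - a.2) * (c.1 - a.1) != 0.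

Definition active (S : seq pt) (u p : pt) : Prop :=
  hull_vertex S u /\ p \in S /\ ~ hull_vertex S p /\ hull_vertex (rem u S) p.

Fixpoint peel_valid (S : seq pt) (us : seq pt) : Prop :=
  match us with
  | [::] => True
  | u :: us' => hull_vertex S u /\ peel_valid (rem u S) us'
  end.

Definition conf (P us : seq pt) (j : nat) : seq pt :=
  foldl (fun S u => rem u S) P (take j us).

Definition becomes_active (P us : seq pt) (j : nat) (u p : pt) : Prop :=
  (j <= size us)%N /\ active (conf P us j) u p /\
  (j = 0%N \/ ~ active (conf P us j.-1) u p).

End Hull.

(* Main.v *)
Require Import Defs.
From HB Require Import structures.
From mathcomp Require Import all_boot all_order all_algebra.
From mathcomp Require Import reals.
From Stdlib Require Classical_Prop.
From mathcomp Require Import ring lra.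
Set Implicit Arguments. Unset Strict Implicit. Unset Printing Implicit Defensive.
Import Order.TTheory GRing.Theory Num.Theory.
Local Open Scope ring_scope.

Section Aux.
Variable R : realType.
Notation pt := (R * R)%type.
Implicit Types (S T P us l : seq pt) (p q u x : pt).

Lemma in_conv_filter (a : pred pt) T p : in_conv (filter a T) p -> in_conv T p.
Proof.
case=> w [w0 [w1 wp]].
exists (fun q => if a q then w q else 0); split; [|split].
- move=> q qT; case: ifP => aq //; apply: w0; by rewrite mem_filter aq.
- by rewrite -big_mkcond /= -big_filter.
- rewrite wp !big_filter !(big_mkcond a) /=; congr (_, _); apply: eq_bigr => q _; by case: (a q); rewrite ?mul0r.
Qed.

Lemma filterC (a b : pred pt) T : filter a (filter b T) = filter b (filter a T).
Proof. by rewrite -!filter_predI; apply: eq_filter => q /=; rewrite andbC. Qed.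

Lemma hv_rem S x p : uniq S -> x != p -> hull_vertex S p -> hull_vertex (rem x S) p.
Proof.
move=> uS xp [pS nc]; split.
  by rewrite rem_filter // mem_filter /= eq_sym xp pS.
move=> h; apply: nc; move: h; rewrite rem_filter // filterC.
exact: in_conv_filter.
Qed.

Lemma conf_S P us k x0 : (k < size us)%N -> conf P us k.+1 = rem (nth x0 us k) (conf P us k).
Proof. by move=> lt; rewrite /conf (take_nth x0) // foldl_rcons. Qed.

Lemma foldl_uniq (l P : seq pt) : uniq P -> uniq (foldl (fun S u => rem u S) P l).
Proof. by elim: l P => //= u l IH P uP; apply: IH; apply: rem_uniq. Qed.

Lemma foldl_sub (l P : seq pt) x : x \in foldl (fun S u => rem u S) P l -> x \in P.
Proof. by elim: l P => //= u l IH P /IH /mem_rem. Qed.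

Lemma conf_uniq P us k : uniq P -> uniq (conf P us k).
Proof. by move=> uP; apply: foldl_uniq. Qed.

Lemma conf_sub P us k x : x \in conf P us k -> x \in P.
Proof. by move/foldl_sub. Qed.

Lemma peel_hv P us k x0 : peel_valid P us -> (k < size us)%N ->
  hull_vertex (conf P us k) (nth x0 us k).
Proof.
elim: us P k => // u us IH P [|k] /= [hu hv] ltk; first by [].
exact: IH.
Qed.


Lemma exists_min (I : finType) (Pr : pred I) (F : I -> R) i0 : Pr i0 ->
  exists k, Pr k /\ forall i, Pr i -> F k <= F i.
Proof.
move=> P0; case: (@arg_minP _ _ I i0 Pr F P0) => k Pk Hk.
by exists k.
Qed.

Lemma sum_delta T x (F : pt -> R) : uniq T -> x \in T ->
  \sum_(q <- T) (q == x)%:R * F q = F x.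
Proof.
move=> uT xT; rewrite (bigD1_seq x) //= eqxx mul1r big1 ?addr0 //.
by move=> q /negbTE ->; rewrite mul0r.
Qed.

Lemma sum_lam T (U : 'I_4 -> pt) (L : 'I_4 -> R) (F : pt -> R) :
  uniq T -> (forall i, U i \in T) ->
  \sum_(q <- T) (\sum_(i < 4) (q == U i)%:R * L i) * F q =
  \sum_(i < 4) L i * F (U i).
Proof.
move=> uT UT.
rewrite (eq_bigr (fun q => \sum_(i < 4) L i * ((q == U i)%:R * F q))); last first.
  by move=> q _; rewrite mulr_suml; apply: eq_bigr => i _; rewrite mulrCA mulrA.
rewrite exchange_big /=; apply: eq_bigr => i _.
by rewrite -mulr_sumr sum_delta.
Qed.


Definition cr (a b c : pt) := (b.1 - a.1) * (c.2 - a.2) - (b.2 - a.2) * (c.1 - a.1).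

Lemma conv_drop T x p (w : pt -> R) : (forall q, q \in T -> 0 <= w q) ->
  \sum_(q <- T) w q = 1 ->
  p = (\sum_(q <- T) w q * q.1, \sum_(q <- T) w q * q.2) -> w x = 0 ->
  in_conv (filter (predC1 x) T) p.
Proof.
move=> w0 w1 wp wx; exists w; split; [|split].
- by move=> q; rewrite mem_filter => /andP [_ /w0].
- rewrite big_filter big_mkcond /= -w1; apply: eq_bigr => q _.
  by case: eqP => // ->.
- rewrite {1}wp !big_filter !big_mkcond /=; congr (_, _); rewrite [RHS]big_mkcond; apply: eq_bigr => q _ /=;
  by case: eqP => // ->; rewrite wx mul0r.
Qed.

Lemma core S p a b c d :
  uniq S -> p \in S -> in_conv [seq q <- S | q != p] p ->
  a \in S -> b \in S -> c \in S -> d \in S ->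
  a != p -> b != p -> c != p -> d != p ->
  uniq [:: a; b; c; d] -> cr a b c != 0 ->
  exists2 k, k \in [:: a; b; c; d] & in_conv [seq q <- rem k S | q != p] p.
Proof.
move=> uS pS [w [w0 [w1 wp]]] aS bS cS dS ap bp cp dp uabcd Dn.
set T := [seq q <- S | q != p].
have uT : uniq T := filter_uniq _ uS.
pose U (i : 'I_4) := nth p [:: a; b; c; d] i.
pose L (i : 'I_4) := nth 0 [:: cr b c d; - cr a c d; cr a b d; - cr a b c] i.
have UT : forall i, U i \in T.
  by case=> [[|[|[|[|i]]]] Hi] //=; rewrite mem_filter /= ?ap ?bp ?cp ?dp.
have Uinj : forall i j, (U i == U j) = (i == j).
  by move=> i j; rewrite /U nth_uniq.
have sumL : \sum_(i < 4) L i = 0.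
  rewrite !big_ord_recl big_ord0 /L /U /= /cr; ring.
have sumL1 : \sum_(i < 4) L i * (U i).1 = 0.
  by rewrite !big_ord_recl big_ord0 /L /U /= /cr; ring.
have sumL2 : \sum_(i < 4) L i * (U i).2 = 0.
  by rewrite !big_ord_recl big_ord0 /L /U /= /cr; ring.
have [i0 Li0] : exists i, 0 < L i.
  apply: Classical_Prop.NNPP => H.
  have Hle : forall i, L i <= 0.
    by move=> i; rewrite leNgt; apply/negP => h; apply: H; exists i.
  move: sumL (Hle ord0) (Hle (lift ord0 ord0)) (Hle (lift ord0 (lift ord0 ord0)))
    (Hle (lift ord0 (lift ord0 (lift ord0 ord0)))).
  rewrite !big_ord_recl big_ord0 /L /=.
  move: Dn; set x := cr a b c => Dn.
  have : x < 0 \/ 0 < x.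
    by case: (ltrgtP x 0) => h; [left|right|move: Dn; rewrite h eqxx].
  by case; lra.
have [k [Lk Hk]] := @exists_min _ (fun i => 0 < L i) (fun i => w (U i) / L i) i0 Li0.
pose t := w (U k) / L k.
have t0 : 0 <= t by apply: divr_ge0; [apply: w0 | apply: ltW].
pose lam q := \sum_(i < 4) (q == U i)%:R * L i.
have lamU : forall i, lam (U i) = L i.
  move=> i; rewrite /lam (bigD1 i) //= eqxx mul1r big1 ?addr0 //.
  by move=> j /negbTE ji; rewrite Uinj eq_sym ji mul0r.
have slam : forall F : pt -> R, \sum_(q <- T) lam q * F q = \sum_(i < 4) L i * F (U i).
  by move=> F; apply: sum_lam.
exists (U k); first by apply: mem_nth.
rewrite rem_filter // filterC.
apply: (@conv_drop T (U k) p (fun q => w q - t * lam q)).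
- move=> q qT; case: (boolP [exists i, q == U i]) => [/existsP [i /eqP ->] | /existsPn H].
    rewrite lamU; case: (ltrP 0 (L i)) => Li.
      rewrite subr_ge0 -ler_pdivlMr //; exact: Hk.
    have := mulr_ge0_le0 t0 Li; have := w0 _ (UT i); lra.
  have -> : lam q = 0 by apply: big1 => i _; rewrite (negbTE (H i)) mul0r.
  by rewrite mulr0 subr0; apply: w0.
- rewrite sumrB -mulr_sumr w1.
  have hs : \sum_(q <- T) lam q = 0.
    under eq_bigr do rewrite -[lam _]mulr1.
    rewrite slam; under eq_bigr do rewrite mulr1.
    exact: sumL.
  by rewrite hs mulr0 subr0.
- have e1 : \sum_(q <- T) (w q - t * lam q) * q.1 = \sum_(q <- T) w q * q.1.
    under eq_bigr do rewrite mulrBl -mulrA.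
    by rewrite sumrB -mulr_sumr slam sumL1 mulr0 subr0.
  have e2 : \sum_(q <- T) (w q - t * lam q) * q.2 = \sum_(q <- T) w q * q.2.
    under eq_bigr do rewrite mulrBl -mulrA.
    by rewrite sumrB -mulr_sumr slam sumL2 mulr0 subr0.
  by rewrite e1 e2.
- by rewrite lamU /t divfK ?subrr // gt_eqF.
Qed.


Lemma remC (S : seq (R * R)%type) x y : uniq S -> rem x (rem y S) = rem y (rem x S).
Proof.
move=> uS; rewrite (rem_filter x (rem_uniq y uS)) (rem_filter y (rem_uniq x uS)).
by rewrite !rem_filter // filterC.
Qed.

Lemma mem_rem_neq (S : seq (R * R)%type) x p : uniq S -> p \in rem x S -> p != x /\ p \in S.
Proof. by move=> uS; rewrite rem_filter // mem_filter => /andP []. Qed.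

Lemma count_bound (E : seq ((R * R) * (R * R))%type) (P : seq (R * R)%type) :
  (forall e, e \in E -> e.2 \in P) ->
  (forall p, (count (fun e => e.2 == p) E <= 3)%N) -> (size E <= 3 * size P)%N.
Proof.
elim: P E => [|a P IH] E HE Hc.
  by case: E HE Hc => // e E HE; have := HE e (mem_head _ _); rewrite in_nil.
rewrite -(count_predC (fun e => e.2 == a)) /= mulnS; apply: leq_add => //.
rewrite -size_filter; apply: IH.
  move=> e; rewrite mem_filter => /andP [/= xa /HE].
  by rewrite inE (negbTE xa).
move=> p; rewrite count_filter; apply: leq_trans (Hc p).
by apply: sub_count => e /andP [].
Qed.

End Aux.

Section Main.
Variable R : realType.
Variables (P us : seq (R * R)%type).
Hypothesis uP : uniq P.
Hypothesis pv : peel_valid P us.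
Local Notation S k := (conf P us k).

Lemma back k p : (k < size us)%N -> p \in S k.+1 -> ~ hull_vertex (S k.+1) p ->
  p \in S k /\ ~ hull_vertex (S k) p.
Proof.
move=> lt; rewrite (conf_S P p lt) => pk nh.
have uSk := @conf_uniq R P us k uP.
have [pw pS] := mem_rem_neq uSk pk.
split=> // h; apply: nh; apply: hv_rem => //; by rewrite eq_sym.
Qed.

Lemma persist j k u p : (j <= k)%N -> (k <= size us)%N -> active (S j) u p ->
  p \in S k -> ~ hull_vertex (S k) p -> active (S k) u p.
Proof.
elim: k => [|k IH] jk ks A pk nh.
  by move: jk A; rewrite leqn0 => /eqP ->.
move: jk; rewrite leq_eqVlt => /orP [/eqP <- //| jk].
have lt : (k < size us)%N by [].
have [pSk nhk] := back lt pk nh.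
have [hu [_ [_ hp]]] := IH jk (ltnW lt) A pSk nhk.
have uSk := @conf_uniq R P us k uP.
move: pk nh; rewrite (conf_S P p lt) => pk nh.
have [pw _] := mem_rem_neq uSk pk.
case: (eqVneq (nth p us k) u) => [wu | wu].
  by exfalso; apply: nh; rewrite wu.
split; [|split; [|split]] => //.
  by apply: hv_rem.
rewrite remC //; apply: hv_rem => //; [exact: rem_uniq | by rewrite eq_sym].
Qed.

Lemma once j j' u p : (j < j')%N -> becomes_active P us j u p ->
  becomes_active P us j' u p -> False.
Proof.
move=> jj' [js [A _]] [j's [A' [j0 | nA]]].
  by move: jj'; rewrite j0.
case: j' jj' j's A' nA => // k jk ks [_ [pS [nh _]]] nA.
have [pSk nhk] := back ks pS nh.
apply: nA; exact (@persist j k u p jk (ltnW ks) A pSk nhk).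
Qed.

Definition inner p k := (k <= size us)%N /\ p \in S k /\ ~ hull_vertex (S k) p.

Lemma inner_max p a b : inner p a -> inner p b -> inner p (maxn a b).
Proof.
by move=> Ha Hb; case: (leqP a b).
Qed.

End Main.

Unset Implicit Arguments.
Set Strict Implicit.

Theorem theorem2 (R : realType) (P us : seq (R * R)) :
  uniq P -> general_position P -> peel_valid P us ->
  forall ev : seq (nat * (R * R) * (R * R)),
    uniq ev ->
    (forall e, e \in ev -> becomes_active P us e.1.1 e.1.2 e.2) ->
    (size ev <= 3 * size P)%N.
Proof.
move=> uP gp pv ev uev Hev.
pose E := map (fun e : nat * (R * R) * (R * R) => (e.1.2, e.2)) ev.
have uE : uniq E.
  rewrite map_inj_in_uniq // => [[[j u] p]] [[j' u'] p'] /Hev B1 /Hev B2 /= [eu ep].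
  move: B1 B2; rewrite -eu -ep /= => B1 B2.
  case: (ltngtP j j') => h.
  - by exfalso; apply: (once uP h B1 B2).
  - by exfalso; apply: (once uP h B2 B1).
  - by rewrite h.
rewrite -(size_map (fun e : nat * (R * R) * (R * R) => (e.1.2, e.2)) ev).
apply: count_bound.
  move=> x /mapP [[[j u] p] /Hev [_ [[_ [pS _]] _]] ->] /=.
  exact: conf_sub pS.
move=> p; rewrite -size_filter.
set F := filter _ E.
have uF : uniq F by apply: filter_uniq.
have Fp : forall x, x \in F -> x.2 = p.
  by move=> x; rewrite mem_filter => /andP [/eqP].
have uL : uniq (map fst F).
  rewrite map_inj_in_uniq // => [[u1 p1] [u2 p2]] h1 h2 /= e.
  by move: (Fp _ h1) (Fp _ h2) => /= -> ->; rewrite e.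
have HL : forall u, u \in map fst F -> exists j, becomes_active P us j u p.
  move=> u /mapP [[u1 p1] h1 /= ->].
  have := Fp _ h1; move: h1; rewrite mem_filter => /andP [_ /mapP [[[j u2] p2] /Hev B [-> ->]]] /= e.
  by exists j; rewrite -e.
rewrite -(size_map fst F).
case: (map fst F) uL HL => [|a [|b [|c [|d L]]]] // uL HL.
exfalso.
have [ja Ba] := HL a (mem_head _ _).
have [jb Bb] := HL b ltac:(by rewrite !inE eqxx ?orbT).
have [jc Bc] := HL c ltac:(by rewrite !inE eqxx ?orbT).
have [jd Bd] := HL d ltac:(by rewrite !inE eqxx ?orbT).
have inB : forall j u, becomes_active P us j u p -> inner P us p j.
  by move=> j u [js [[_ [pS [nh _]]] _]].
pose J := maxn (maxn ja jb) (maxn jc jd).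
have [JS [pJ nhJ]] : inner P us p J.
  by apply: inner_max; apply: inner_max; apply: inB; eassumption.
have act : forall j u, (j <= J)%N -> becomes_active P us j u p -> active (conf P us J) u p.
  by move=> j u jJ [_ [A _]]; apply: (persist uP jJ JS A pJ nhJ).
have Aa := act ja a ltac:(by rewrite /J !leq_max leqnn) Ba.
have Ab := act jb b ltac:(by rewrite /J !leq_max leqnn ?orbT) Bb.
have Ac := act jc c ltac:(by rewrite /J !leq_max leqnn ?orbT) Bc.
have Ad := act jd d ltac:(by rewrite /J !leq_max leqnn ?orbT) Bd.
have uS := @conf_uniq R P us J uP.
have cv : in_conv [seq q <- conf P us J | q != p] p.
  by apply: Classical_Prop.NNPP => h; apply: nhJ.
have neq : forall u, active (conf P us J) u p -> u \in conf P us J /\ u != p.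
  move=> u [hu [_ [nh _]]]; split; first by case: hu.
  by apply/eqP => up; apply: nh; rewrite -up.
have [aS ap] := neq _ Aa.
have [bS bp] := neq _ Ab.
have [cS cp] := neq _ Ac.
have [dS dp] := neq _ Ad.
have u4 : uniq [:: a; b; c; d].
  by move: uL; rewrite -[a :: _]/([:: a; b; c; d] ++ L) cat_uniq => /andP [].
have Dn : cr a b c != 0.
  move: u4; rewrite /= !inE !negb_or => /and4P [/and3P [ab ac _] /andP [bc _] _ _].
  by apply: gp; rewrite ?(conf_sub aS) ?(conf_sub bS) ?(conf_sub cS) // eq_sym.
have [k kin kc] := core uS pJ cv aS bS cS dS ap bp cp dp u4 Dn.
have hvk : forall u, active (conf P us J) u p -> ~ in_conv [seq q <- rem u (conf P us J) | q != p] p.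
  by move=> u [_ [_ [_ [_ h]]]].
by move: kin; rewrite !inE => /or4P [] /eqP k_eq; move: kc; rewrite k_eq;
  [apply: hvk Aa | apply: hvk Ab | apply: hvk Ac | apply: hvk Ad].
Qed.
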